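(* For every claw-free cubic graph $G$, $\nu_2(G) \geq \frac{5}{6}\cdot |V(G)|$.
   Context: Graphs are finite, without loops, possibly with multiple edges; a graph is cubic if every vertex has degree $3$, and claw-free if it has no induced subgraph isomorphic to $K_{1,3}$. For $k\geq 1$, $\nu_k(G)$ is the maximum number of edges of a $k$-edge-colorable subgraph of $G$. *)

(* Defs.v *)
(* Parallel edges are allowed (distinct edges with the same endpoints). *)
From mathcomp Require Import all_boot.
Set Implicit Arguments. Unset Strict Implicit. Unset Printing Implicit Defensive.

Section Multigraph.
Variables (V E : finType) (src dst : E -> V).

Definition loopless : Prop := forall e : E, src e != dst e.

Definition incident (e : E) (v : V) : bool := (src e == v) || (dst e == v).

Definition degree (v : V) : nat := #|[set e : E | incident e v]|.

Definition cubic : Prop := forall v : V, degree v = 3.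

Definition adj (u w : V) : bool :=
  [exists e : E, ((src e == u) && (dst e == w)) || ((src e == w) && (dst e == u))].

(* G contains an induced claw K_{1,3}: a centre v with three distinct,
   pairwise non-adjacent neighbours a b c (each joined to v by exactly one edge,
   so that the induced subgraph on {v,a,b,c} is exactly K_{1,3}). *)
Definition edge_mult (u w : V) : nat :=
  #|[set e : E | ((src e == u) && (dst e == w)) || ((src e == w) && (dst e == u))]|.

Definition has_induced_claw : Prop :=
  exists v a b c : V,
    [/\ a != b, a != c, b != c,
        [/\ edge_mult v a = 1, edge_mult v b = 1 & edge_mult v c = 1] &
        [/\ ~~ adj a b, ~~ adj a c & ~~ adj b c]].

Definition claw_free : Prop := ~ has_induced_claw.

Definition edges_adjacent (e f : E) : bool :=
  (e != f) && [|| incident f (src e) | incident f (dst e)].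

Definition k_edge_colorable (k : nat) (F : {set E}) : bool :=
  [exists c : {ffun E -> 'I_k},
    [forall e : E, forall f : E,
       [&& e \in F, f \in F & edges_adjacent e f] ==> (c e != c f)]].

(* nu_k(G): maximum number of edges of a k-edge-colourable subgraph.
   (Edge-sets suffice: isolated vertices do not affect colourability.) *)
Definition nu (k : nat) : nat :=
  \max_(F : {set E} | k_edge_colorable k F) #|F|.

End Multigraph.

(* Main.v *)
Require Import Defs.
From mathcomp Require Import all_boot zify.
Set Implicit Arguments. Unset Strict Implicit. Unset Printing Implicit Defensive.

Section Sumner.
Variables (V : finType) (R : rel V).
Hypothesis Rsym : symmetric R.
Hypothesis Rirr : irreflexive R.
Hypothesis Rclaw : forall v a b c, R v a -> R v b -> R v c ->
  a != b -> a != c -> b != c -> [|| R a b, R a c | R b c].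

Implicit Types (A B C S : {set V}).
Definition closed (S A : {set V}) : bool :=
  [forall a in A, forall b in S :\: A, ~~ R a b].

Definition conn (C : {set V}) : bool :=
  [forall A : {set V}, ((A \subset C) && (A != set0) && (A != C)) ==>
     [exists a in A, exists b in C :\: A, R a b]].

Lemma connP C : reflect (forall A, A \subset C -> A != set0 -> A != C ->
   exists a b, [/\ a \in A, b \in C :\: A & R a b]) (conn C).
Proof.
apply: (iffP forallP) => H A.
  move=> sAC nA nAC; move/implyP: (H A); rewrite sAC nA nAC => /(_ isT).
  by case/exists_inP => a aA /exists_inP [b bC Rab]; exists a, b.
apply/implyP => /andP [/andP [sAC nA] nAC].
have [a [b [aA bC Rab]]] := H A sAC nA nAC.
by apply/exists_inP; exists a => //; apply/exists_inP; exists b.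
Qed.

Lemma closedP S A : reflect (forall a b, a \in A -> b \in S :\: A -> ~~ R a b) (closed S A).
Proof.
apply: (iffP forall_inP) => H.
  by move=> a b aA bS; move/forall_inP: (H a aA) => /(_ b bS).
by move=> a aA; apply/forall_inP => b bS; apply: H.
Qed.

Lemma conn_closed C A : conn C -> A \subset C -> closed C A -> A = set0 \/ A = C.
Proof.
move/connP=> H sAC /closedP cl.
case: (eqVneq A set0) => [->|nA]; first by left.
case: (eqVneq A C) => [->|nAC]; first by right.
by have [a [b [aA bC Rab]]] := H A sAC nA nAC; move: (cl a b aA bC); rewrite Rab.
Qed.

Lemma conn1 x : conn [set x].
Proof.
apply/connP => A sA nA nAx; exfalso.
case/set0Pn: nA => a aA.
have := subsetP sA a aA; rewrite inE => /eqP ax; subst a.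
by move/negP: nAx; apply; apply/eqP/setP => y; rewrite inE; apply/idP/eqP => [/(subsetP sA)|->//]; rewrite inE => /eqP.
Qed.

Lemma connU1 C w c : conn C -> w \notin C -> c \in C -> R w c -> conn (w |: C).
Proof.
move/connP => H wC cC Rwc; apply/connP => A sA nA nAC.
case: (boolP (w \in A)) => wA.
  set A' := A :\ w.
  have sA' : A' \subset C.
    apply/subsetP => x; rewrite !inE => /andP [xw xA].
    by move: (subsetP sA x xA); rewrite !inE (negbTE xw).
  case: (eqVneq A' set0) => [A0|nA'].
    exists w, c; split => //; rewrite !inE cC orbT andbT.
    apply/negP => cA.
    have cw : c != w by apply/negP => /eqP cw; subst c; rewrite cC in wC.
    have : c \in A' by rewrite !inE cA andbT cw.
    by rewrite A0 inE.
  case: (eqVneq A' C) => [AC|nAC'].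
    exfalso; move/negP: nAC; apply; apply/eqP/setP => x; rewrite !inE.
    apply/idP/idP => [/(subsetP sA)|]; first by rewrite !inE.
    case/orP => [/eqP -> //|xC]; move: xC; rewrite -AC inE => /andP [] //.
  have [a [b [aA bC Rab]]] := H A' sA' nA' nAC'.
  exists a, b; split => //.
    by move: aA; rewrite !inE => /andP [].
  move: bC; rewrite !inE => /andP [bA' bC]; rewrite bC orbT andbT.
  apply/negP => bA; move/negP: bA'; apply; rewrite bA andbT.
  by apply/negP => /eqP bw; subst b; rewrite bC in wC.
have sAC : A \subset C.
  apply/subsetP => x xA; move: (subsetP sA x xA); rewrite !inE.
  by case/orP => // /eqP xw; subst x; rewrite xA in wA.
case: (eqVneq A C) => [AC|nAC'].
  exists c, w; split; first by rewrite AC.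
    by rewrite !inE eqxx /= AC wC.
  by rewrite Rsym.
have [a [b [aA bC Rab]]] := H A sAC nA nAC'.
by exists a, b; split => //; move: bC; rewrite !inE => /andP [-> ->]; rewrite orbT.
Qed.


Lemma conn0 : conn set0.
Proof.
apply/connP => A sA nA; exfalso; move/negP: nA; apply.
by apply/eqP/setP => x; rewrite inE; apply/negP => /(subsetP sA); rewrite inE.
Qed.

Definition valid S y z C :=
  [&& y \in S, z \in S, R y z, C \subset S :\: [set y; z] & conn C].

Lemma KL S : conn S -> 1 < #|S| ->
  exists y z, [/\ y \in S, z \in S, R y z & conn (S :\: [set y; z])].
Proof.
move=> cS S2.
have [s [t [sS tS st]]] : exists s t, [/\ s \in S, t \in S & s != t].
  by case/card_gt1P: S2 => s [t [? ? ?]]; exists s, t.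
have s1S : [set s] != S.
  by apply/negP => /eqP e; move: tS; rewrite -e inE eq_sym (negbTE st).
have s1sub : forall d, d \in S -> [set d] \subset S.
  by move=> d dS; apply/subsetP => x; rewrite inE => /eqP ->.
have s1n0 : forall d : V, [set d] != set0.
  by move=> d; apply/set0Pn; exists d; rewrite inE.
pose P n := [exists y, exists z, exists C : {set V}, valid S y z C && (#|C| == n)].
have P0 : exists n, P n.
  have [a [b [aA bC Rab]]] := connP _ cS [set s] (s1sub s sS) (s1n0 s) s1S.
  exists 0; apply/existsP; exists a; apply/existsP; exists b; apply/existsP; exists set0.
  rewrite cards0 eqxx andbT /valid Rab sub0set conn0.
  move: aA bC; rewrite !inE => /eqP -> /andP [_ ->]; by rewrite sS.
have Pb : forall n, P n -> n <= #|V|.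
  move=> n /existsP [y /existsP [z /existsP [C /andP [_ /eqP <-]]]]; exact: max_card.
case: (ex_maxnP P0 Pb) => i /existsP [y /existsP [z /existsP [C /andP [vC /eqP Ci]]]] imax.
have big : forall y' z' C', valid S y' z' C' -> #|C| < #|C'| -> False.
  move=> y' z' C' v; rewrite Ci ltnNge; move/negP; apply; apply: imax.
  by apply/existsP; exists y'; apply/existsP; exists z'; apply/existsP; exists C'; rewrite v eqxx.
move: vC => /and5P [yS zS Ryz sC cC].
have CS : C \subset S by apply: subset_trans sC (subsetDl _ _).
have yC : y \notin C by apply/negP => /(subsetP sC); rewrite !inE eqxx.
have zC : z \notin C by apply/negP => /(subsetP sC); rewrite !inE eqxx orbT.
have yz : y != z by apply/negP => /eqP zy; subst z; rewrite Rirr in Ryz.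
exists y, z; split => //.
suff -> : S :\: [set y; z] = C by [].
apply/eqP; rewrite eqEsubset sC andbT; apply/subsetP => d dS'; apply/negPn/negP => dC.
have ext : forall a b, a \in C -> b \in S :\: [set y; z] -> R a b -> b \in C.
  move=> a b aC bS Rab; apply/negPn/negP => bC; apply: (big y z (b |: C)); last by rewrite cardsU1 bC.
  rewrite /valid yS zS Ryz /=; apply/andP; split.
    by apply/subsetP => x; rewrite in_setU1 => /orP [/eqP ->//|/(subsetP sC)].
  by apply: (connU1 cC bC aC); rewrite Rsym.
have Cadj : C != set0 -> exists c o, [/\ c \in C, o \in [set y; z] & R c o].
  move=> nC; have nCS : C != S by apply/negP => /eqP e; move: yC; rewrite e yS.
  have [a [b [aC bC Rab]]] := connP _ cS C CS nC nCS.
  exists a, b; split => //; apply/negPn/negP => byz.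
  move: bC; rewrite inE => /andP [bnC bS].
  by move: (ext a b aC); rewrite inE byz bS Rab (negbTE bnC) => /(_ isT isT).
have connK : conn (C :|: [set y; z]).
  case: (eqVneq C set0) => [->|nC].
    rewrite set0U; apply: connU1; [exact: conn1| |by rewrite inE|by []].
    by rewrite inE; apply/negP => /eqP zy; subst z; rewrite Rirr in Ryz.
  have [c [o [cC' oyz Rco]]] := Cadj nC.
  have -> : C :|: [set y; z] = (if o == y then z else y) |: (o |: C).
    apply/setP => x; rewrite !inE; move: oyz; rewrite !inE.
    by case/orP => /eqP ->; rewrite ?eqxx; [|case: (eqVneq z y) => [->|]; rewrite ?eqxx];
       case: (x == y); case: (x == z); rewrite ?orbT ?orbF.
  have oC : o \notin C by move: oyz; rewrite !inE => /orP [] /eqP ->.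
  have cO : conn (o |: C) by apply: (connU1 cC oC cC'); rewrite Rsym.
  case: (eqVneq o y) => [oy|oy].
    subst o; apply: (connU1 (c:=y) cO); last by rewrite Rsym.
      by rewrite !inE negb_or zC andbT eq_sym.
    by rewrite !inE eqxx.
  have oz : o = z by move: oyz; rewrite !inE (negbTE oy) => /eqP.
  subst o; apply: (connU1 (c:=z) cO); last by [].
    by rewrite !inE negb_or yC andbT.
  by rewrite !inE eqxx.
have noD : forall d1 d2, d1 \in S :\: [set y; z] -> d1 \notin C ->
    d2 \in S :\: [set y; z] -> d2 \notin C -> ~~ R d1 d2.
  move=> d1 d2 d1S d1C d2S d2C; apply/negP => R12.
  apply: (big d1 d2 (C :|: [set y; z])).
    rewrite /valid R12 connK andbT; move: d1S d2S; rewrite !inE => /andP [d1yz ->] /andP [d2yz ->] /=.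
    apply/subsetP => x; rewrite !inE => /orP [xC|xyz].
      have := subsetP CS x xC => ->; rewrite andbT; apply/negP => /orP [] /eqP xd; subst x.
        by rewrite xC in d1C.
      by rewrite xC in d2C.
    have -> : x \in S by case/orP: xyz => /eqP ->.
    rewrite andbT; apply/negP => /orP [] /eqP xd; subst x; by rewrite xyz in d1yz d2yz.
  rewrite cardsU; rewrite (_ : C :&: [set y; z] = set0); last first.
    apply/setP => x; rewrite !inE; apply/negP => /andP [xC /orP [] /eqP xe]; subst x.
      by rewrite xC in yC.
    by rewrite xC in zC.
  by rewrite cards0 subn0 cards2 addnS ltnS leq_addr.
have dS : d \in S by move: dS'; rewrite inE => /andP [].
have dyz : d \notin [set y; z] by move: dS'; rewrite inE => /andP [].
have addone : forall u v x, R u v -> u \in S -> v \in S -> x \in S -> x != u -> x != v ->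
    x \notin C -> u \notin C -> v \notin C -> (C = set0 \/ exists c, c \in C /\ R x c) -> False.
  move=> u v x Ruv uS vS xS xu xv xC uC vC H; apply: (big u v (x |: C)); last by rewrite cardsU1 xC.
  rewrite /valid Ruv uS vS /=; apply/andP; split.
    apply/subsetP => w; rewrite !inE => /orP [/eqP ->|wC]; first by rewrite negb_or xu xv xS.
    rewrite (subsetP CS w wC) andbT; apply/negP => /orP [] /eqP e; subst w.
      by rewrite wC in uC.
    by rewrite wC in vC.
  case: H => [->|[c [cC' Rxc]]]; first by rewrite setU0; exact: conn1.
  by apply: (connU1 cC xC cC').
have key : forall b o, [set b; o] = [set y; z] -> R d b -> False.
  move=> b o bo Rdb.
  have byz : b \in [set y; z] by rewrite -bo !inE eqxx.
  have oyz : o \in [set y; z] by rewrite -bo !inE eqxx orbT.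
  have bS : b \in S by move: byz; rewrite !inE => /orP [] /eqP ->.
  have oS : o \in S by move: oyz; rewrite !inE => /orP [] /eqP ->.
  have bC : b \notin C by apply/negP => /(subsetP sC); rewrite inE -bo !inE eqxx.
  have oC : o \notin C by apply/negP => /(subsetP sC); rewrite inE -bo !inE eqxx orbT.
  have db : d != b by apply/negP => /eqP e; subst d; move: dyz; rewrite -bo !inE eqxx.
  have dno : d != o by apply/negP => /eqP e; subst d; move: dyz; rewrite -bo !inE eqxx orbT.
  have zbo : z \in [set b; o] by rewrite bo !inE eqxx orbT.
  have ybo : y \in [set b; o] by rewrite bo !inE eqxx.
  have Rbo : R b o.
    move: byz; rewrite !inE => /orP [] /eqP eb; subst b.
      by move: zbo; rewrite !inE eq_sym (negbTE yz) /= => /eqP <-.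
    by move: ybo; rewrite !inE (negbTE yz) /= => /eqP <-; rewrite Rsym.
  have ob : o != b by apply/negP => /eqP e; subst o; rewrite Rirr in Rbo.
  have bo' : b != o by rewrite eq_sym.
  have od : o != d by rewrite eq_sym.
  have bd : b != d by rewrite eq_sym.
  case: (boolP ((C == set0) || [exists c in C, R o c])) => [H|].
    apply: (addone d b o Rdb dS bS oS od ob oC dC bC).
    case/orP: H => [/eqP ->|/exists_inP [c cC' Roc]]; [by left|by right; exists c].
  rewrite negb_or => /andP [nC /exists_inP nR].
  have [c [o' [cC' o'yz Rco']]] := Cadj nC.
  have o'b : o' = b.
    move: o'yz; rewrite -bo !inE => /orP [/eqP //|/eqP e]; subst o'.
    by exfalso; apply: nR; exists c => //; rewrite Rsym.
  subst o'.
  case: (boolP (R d o)) => Rdo.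
    apply: (addone d o b Rdo dS oS bS bd bo' bC dC oC); right; exists c; split => //; by rewrite Rsym.
  have oc : o != c by apply/negP => /eqP e; subst c; rewrite cC' in oC.
  have dc : d != c by apply/negP => /eqP e; subst c; rewrite cC' in dC.
  have Rbd : R b d by rewrite Rsym.
  have Rbc : R b c by rewrite Rsym.
  case/or3P: (Rclaw Rbo Rbd Rbc od oc dc) => [Rod|Roc|Rdc].
  - by rewrite Rsym Rod in Rdo.
  - by apply: nR; exists c.
  - by move: dC; rewrite (ext c d cC' dS') // Rsym.
have d1S : [set d] != S.
  apply/negP => /eqP e; have : 1 < #|[set d]| by rewrite e.
  by rewrite cards1.
have [a [b [aA bS' Rab]]] := connP _ cS [set d] (s1sub d dS) (s1n0 d) d1S.
move: aA; rewrite inE => /eqP ea; subst a.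
have bS : b \in S by move: bS'; rewrite inE => /andP [].
have bC : b \notin C by apply/negP => bC; move: dC; rewrite (ext b d bC dS') // Rsym.
have byz : b \in [set y; z].
  apply/negPn/negP => nb; have bS'' : b \in S :\: [set y; z] by rewrite inE nb bS.
  by move: (noD d b dS' dC bS'' bC); rewrite Rab.
move: byz; rewrite !inE => /orP [] /eqP eb; subst b.
  by apply: (key y z).
by apply: (key z y) => //; rewrite setUC.
Qed.


Lemma closed_sub S A B : closed S A -> B \subset A -> closed A B -> closed S B.
Proof.
move=> /closedP cA sBA /closedP cB; apply/closedP => a b aB; rewrite inE => /andP [bB bS].
case: (boolP (b \in A)) => bA.
  by apply: cB => //; rewrite inE bB bA.
by apply: cA; [exact: (subsetP sBA)|rewrite inE bA bS].
Qed.

Lemma closed_subC S A B : closed S A -> B \subset S :\: A -> closed (S :\: A) B -> closed S B.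
Proof.
move=> /closedP cA sB /closedP cB; apply/closedP => a b aB; rewrite inE => /andP [bB bS].
have := subsetP sB a aB; rewrite inE => /andP [aA aS].
case: (boolP (b \in A)) => bA.
  by rewrite Rsym; apply: cA => //; rewrite inE aA aS.
by apply: cB => //; rewrite !inE bB bA bS.
Qed.

Theorem GT S : (forall A, A \subset S -> closed S A -> ~~ odd #|A|) ->
  exists p : V -> V, forall v, v \in S -> [/\ p v \in S, R v (p v) & p (p v) = v].
Proof.
move: {2}#|S| (leqnn #|S|) => n; elim: n S => [|n IH] S Sn Hev.
  exists id => v vS; exfalso; move: Sn; rewrite leqn0 => /eqP /cards0_eq S0.
  by rewrite S0 inE in vS.
case: (boolP [exists A : {set V}, [&& A \subset S, closed S A, A != set0 & A != S]]).
  case/existsP => A /and4P [sAS cA nA nAS].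
  have [pA HA] : exists p : V -> V, forall v, v \in A -> [/\ p v \in A, R v (p v) & p (p v) = v].
    apply: IH.
      have : A \proper S by rewrite properEneq nAS sAS.
      by move/proper_card => h; rewrite -ltnS; apply: leq_trans h Sn.
    move=> B sBA cB; apply: Hev; first exact: subset_trans sBA sAS.
    exact: closed_sub cA sBA cB.
  have [pB HB] : exists p : V -> V, forall v, v \in S :\: A ->
      [/\ p v \in S :\: A, R v (p v) & p (p v) = v].
    apply: IH.
      have : S :\: A \proper S.
        rewrite properEneq subsetDl andbT; apply/negP => /eqP e.
        case/set0Pn: nA => a aA; have := subsetP sAS a aA; rewrite -e inE aA.
        by [].
      by move/proper_card => h; rewrite -ltnS; apply: leq_trans h Sn.
    move=> B sB cB; apply: Hev; first exact: subset_trans sB (subsetDl _ _).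
    exact: closed_subC cA sB cB.
  exists (fun v => if v \in A then pA v else pB v) => v vS.
  case: (boolP (v \in A)) => vA.
    have [pvA R1 pp] := HA v vA; rewrite pvA pp; split => //; exact: (subsetP sAS).
  have vSA : v \in S :\: A by rewrite inE vA vS.
  have [pvB R1 pp] := HB v vSA; move: (pvB); rewrite inE => /andP [pnA pS].
  by rewrite (negbTE pnA) pp.
move=> nex.
have cS : conn S.
  apply/connP => A sA nA nAS.
  have ncl : ~~ closed S A.
    apply/negP => cl; move/negP: nex; apply; apply/existsP; exists A; by rewrite sA cl nA nAS.
  move: ncl; rewrite /closed negb_forall_in => /exists_inP [a aA].
  rewrite negb_forall_in => /exists_inP [b bS]; rewrite negbK => Rab.
  by exists a, b.
case: (eqVneq S set0) => [S0|nS0].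
  by exists id => v; rewrite S0 inE.
have evS : ~~ odd #|S|.
  apply: Hev => //; apply/closedP => a b _; rewrite setDv inE.
  by [].
have S2 : 1 < #|S|.
  case/set0Pn: nS0 => s sS; have : 0 < #|S| by apply/card_gt0P; exists s.
  by move: evS; case: #|S| => [|[|m]].
have [y [z [yS zS Ryz cS']]] := KL cS S2.
have yz : y != z by apply/negP => /eqP zy; subst z; rewrite Rirr in Ryz.
have yzS : [set y; z] \subset S by apply/subsetP => x; rewrite !inE => /orP [] /eqP ->.
have cardS' : #|S :\: [set y; z]| = #|S| - 2 by rewrite cardsD (setIidPr yzS) cards2 yz.
have [p' Hp'] : exists p : V -> V, forall v, v \in S :\: [set y; z] ->
    [/\ p v \in S :\: [set y; z], R v (p v) & p (p v) = v].
  apply: IH.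
    by rewrite cardS'; move: Sn; lia.
  move=> A sA cA; case: (conn_closed cS' sA cA) => ->; first by rewrite cards0.
  by rewrite cardS' oddB // (negbTE evS).
exists (fun v => if v == y then z else if v == z then y else p' v) => v vS.
have zy : z != y by rewrite eq_sym.
case: (eqVneq v y) => [->|vy]; first by rewrite eqxx (negbTE zy) zS Ryz.
case: (eqVneq v z) => [->|vz]; first by rewrite eqxx yS Rsym Ryz.
have vS' : v \in S :\: [set y; z] by rewrite !inE negb_or vy vz vS.
have [pS' Rp pp] := Hp' v vS'.
move: (pS'); rewrite !inE negb_or => /andP [/andP [py pz] pS].
by rewrite (negbTE py) (negbTE pz) pp.
Qed.

End Sumner.


Section Graph.
Variables (V E : finType) (src dst : E -> V).
Hypothesis hl : loopless src dst.
Hypothesis hc : cubic src dst.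
Hypothesis hcf : claw_free src dst.

Local Notation R := (adj src dst).

Lemma adj_sym : symmetric R.
Proof.
move=> u w; rewrite /adj; apply/existsP/existsP; case=> e He; exists e; by rewrite orbC.
Qed.

Lemma adj_irr : irreflexive R.
Proof.
move=> v; apply/negbTE; rewrite /adj; apply/existsP; case=> e; rewrite orbb.
case/andP => /eqP s /eqP d.
by move: (hl e); rewrite s d eqxx.
Qed.

Lemma card_predT (T : finType) (P : pred T) : #|[set e | P e]| = \sum_e (P e : nat).
Proof.
rewrite -sum1dep_card; rewrite [RHS](bigID P) /= [X in _ + X]big1 ?addn0.
  by apply: eq_bigr => e ->.
by move=> e /negbTE ->.
Qed.

Lemma card_pred (P : pred E) : #|[set e | P e]| = \sum_e (P e : nat).
Proof.
rewrite -sum1dep_card; rewrite [RHS](bigID P) /= [X in _ + X]big1 ?addn0.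
  by apply: eq_bigr => e ->.
by move=> e /negbTE ->.
Qed.

Lemma handshake (A : {set V}) (F : {set E}) :
  \sum_(v in A) #|[set e in F | incident src dst e v]| =
  \sum_(e in F) ((src e \in A) + (dst e \in A)).
Proof.
under eq_bigr => v _ do rewrite card_pred.
rewrite exchange_big /= [RHS]big_mkcond /=; apply: eq_bigr => e _.
case: (boolP (e \in F)) => eF /=; last by rewrite big1.
rewrite /incident.
have sd := hl e.
have H : forall x : V, ((src e == x) || (dst e == x) : nat) = (src e == x) + (dst e == x).
  move=> x; case: (eqVneq (src e) x) => [<-|]; last by [].
  by rewrite (negbTE (_ : dst e != src e)) // eq_sym.
under eq_bigr => v _ do rewrite H.
rewrite big_split /=.
have G : forall x : V, \sum_(v in A) (x == v : nat) = (x \in A).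
  move=> x; case: (boolP (x \in A)) => xA.
    rewrite (bigD1 x) //= eqxx big1 // => v /andP [_ vx]; by rewrite eq_sym (negbTE vx).
  by rewrite big1 // => v vA; case: (eqVneq x v) => // xv; subst v; rewrite vA in xA.
by rewrite !G.
Qed.

Definition Qs (u w : V) := [set e : E | ((src e == u) && (dst e == w)) || ((src e == w) && (dst e == u))].

Lemma Rclaw_g v a b c : R v a -> R v b -> R v c -> a != b -> a != c -> b != c ->
  [|| R a b, R a c | R b c].
Proof.
move=> Ra Rb Rc ab ac bc.
apply/negPn/negP; rewrite !negb_or => /and3P [nab nac nbc].
apply: hcf.
have sub : forall x, Qs v x \subset [set e | incident src dst e v].
  move=> x; apply/subsetP => e; rewrite !inE /incident.
  by case/orP => /andP [/eqP -> /eqP ->]; rewrite eqxx ?orbT.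
have gt0 : forall x, R v x -> 0 < #|Qs v x|.
  move=> x /existsP [e He]; apply/card_gt0P; exists e; by rewrite inE.
have dis : forall x y, x != y -> Qs v x :&: Qs v y = set0.
  move=> x y xy; apply/setP => e; rewrite !inE; apply/negP.
  move=> /andP [/orP [] /andP [/eqP s1 /eqP d1] /orP [] /andP [/eqP s2 /eqP d2]];
  move/eqP: xy; apply; congruence.
have U : #|Qs v a :|: Qs v b :|: Qs v c| = #|Qs v a| + #|Qs v b| + #|Qs v c|.
  rewrite cardsU setIUl dis // dis // setU0 cards0 subn0.
  by rewrite cardsU dis // cards0 subn0.
have le3 : #|Qs v a :|: Qs v b :|: Qs v c| <= 3.
  rewrite -(hc v) /degree; apply: subset_leq_card.
  by rewrite !subUset !sub.
have := gt0 a Ra; have := gt0 b Rb; have := gt0 c Rc; move: le3; rewrite U => le3 g1 g2 g3.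
have ea : edge_mult src dst v a = 1 by rewrite /edge_mult -/(Qs v a); lia.
have eb : edge_mult src dst v b = 1 by rewrite /edge_mult -/(Qs v b); lia.
have ec : edge_mult src dst v c = 1 by rewrite /edge_mult -/(Qs v c); lia.
by exists v, a, b, c; split.
Qed.

Lemma even_closed (A : {set V}) : closed R [set: V] A -> ~~ odd #|A|.
Proof.
move/closedP => cl.
have H : \sum_(v in A) degree src dst v = 3 * #|A|.
  by under eq_bigr => v _ do rewrite hc; rewrite sum_nat_const mulnC.
have H2 : \sum_(v in A) degree src dst v = \sum_(e in [set: E]) ((src e \in A) + (dst e \in A)).
  rewrite -handshake; apply: eq_bigr => v _; rewrite /degree.
  by apply: eq_card => e; rewrite !inE.
have H3 : forall e, (src e \in A) = (dst e \in A).
  move=> e; case: (boolP (src e \in A)) => sA; case: (boolP (dst e \in A)) => dA //.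
    have := cl (src e) (dst e) sA; rewrite !inE dA => /(_ isT).
    by rewrite /adj; move/existsPn => /(_ e); rewrite !eqxx.
  have := cl (dst e) (src e) dA; rewrite !inE sA => /(_ isT).
  by rewrite /adj; move/existsPn => /(_ e); rewrite !eqxx orbT.
have : ~~ odd (3 * #|A|).
  rewrite -H H2; under eq_bigr => e _ do rewrite H3 addnn.
  by elim/big_rec: _ => // e m _; rewrite oddD odd_double.
by rewrite oddM.
Qed.

Lemma pm_exists : exists M : {set E},
  (forall v, exists2 e, e \in M & incident src dst e v) /\
  (forall v e f, e \in M -> f \in M -> incident src dst e v -> incident src dst f v -> e = f).
Proof.
have [p Hp] := GT adj_sym adj_irr Rclaw_g (S := [set: V])
  (fun A _ cA => even_closed cA).
have Hp' : forall v, R v (p v) /\ p (p v) = v.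
  by move=> v; have [_ ? ?] := Hp v (in_setT v).
pose P v e := incident src dst e v && incident src dst e (p v).
have Pswap : forall v, P (p v) =1 P v.
  by move=> v e; rewrite /P (proj2 (Hp' v)) andbC.
have mem2 : forall u v e, P u e -> incident src dst e v -> v = u \/ v = p u.
  move=> u v e; have upu : u <> p u.
    by move=> h; move: (adj_irr u); rewrite {2}h (proj1 (Hp' u)).
  have sd : src e <> dst e by move=> h; move: (hl e); rewrite h eqxx.
  rewrite /P /incident => /andP [/orP [] /eqP h1 /orP [] /eqP h2] /orP [] /eqP h3;
  first [by left; congruence | by right; congruence | exfalso; congruence].
have Peq : forall u v e, P u e -> incident src dst e v -> P v =1 P u.
  move=> u v e Pu iv; case: (mem2 u v e Pu iv) => -> //; exact: Pswap.
pose M := [set e | P (src e) e && [forall f, P (src e) f ==> (enum_rank e <= enum_rank f)]].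
have inc_src : forall e, incident src dst e (src e) by move=> e; rewrite /incident eqxx.
have Mmin : forall v e, e \in M -> incident src dst e v ->
    P v e /\ forall f, P v f -> enum_rank e <= enum_rank f.
  move=> v e; rewrite inE => /andP [Pe /forallP mn] iv.
  have E1 := Peq _ _ _ Pe iv; split; first by rewrite E1.
  by move=> f; rewrite E1 => Pf; move/implyP: (mn f); apply.
exists M; split.
  move=> v; have [e0 He0] : exists e, P v e.
    have /existsP [e He] := proj1 (Hp' v); exists e; rewrite /P /incident.
    by case/orP: He => /andP [/eqP -> /eqP ->]; rewrite !eqxx ?orbT.
  case: (arg_minnP (fun e => enum_rank e : nat) He0) => e Pe mn.
  exists e; last by move: Pe; rewrite /P => /andP [].
  have E1 : P (src e) =1 P v by apply: (Peq v (src e) e Pe (inc_src e)).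
  rewrite inE E1 Pe /=; apply/forallP => f; apply/implyP; rewrite E1; exact: mn.
move=> v e f eM fM ie if_.
have [Pe me] := Mmin v e eM ie; have [Pf mf] := Mmin v f fM if_.
apply: enum_rank_inj; apply/val_inj/eqP; rewrite eqn_leq; apply/andP; split.
  exact: me.
exact: mf.
Qed.

Definition dF (F : {set E}) v := #|[set e in F | incident src dst e v]|.

Lemma handshake2 (F : {set E}) : \sum_v dF F v = 2 * #|F|.
Proof.
rewrite /dF; transitivity (\sum_(v in [set: V]) #|[set e in F | incident src dst e v]|).
  by apply: eq_bigl => v; rewrite inE.
rewrite handshake (eq_bigr (fun _ => 2)) => [|e _]; last by rewrite !inE.
by rewrite sum_nat_const mulnC.
Qed.

Lemma main : 5 * #|V| <= 6 * nu src dst 2.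
Proof.
have [M [Mex Muniq]] := pm_exists.
pose valid (F : {set E}) := (M \subset F) && [forall v, dF F v <= 2].
have dM1 : forall v, dF M v <= 1.
  move=> v; have [m mM im] := Mex v.
  rewrite /dF (_ : [set e in M | incident src dst e v] = [set m]) ?cards1 //.
  apply/setP => e; rewrite !inE; apply/idP/eqP => [/andP [eM ie]|->]; last by rewrite mM im.
  exact: Muniq eM mM ie im.
have vM : valid M.
  rewrite /valid subxx /=; apply/forallP => v; exact: leq_trans (dM1 v) _.
case: (arg_maxnP (fun F : {set E} => #|F|) vM) => F /andP [MF /forallP F2] Fmax.
have inF : forall e, e \in M -> e \in F by move=> e; apply: (subsetP MF).
have col : k_edge_colorable src dst 2 F.
  apply/existsP; exists [ffun e => if e \in M then ord0 else ord_max : 'I_2].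
  apply/forallP => e; apply/forallP => f; apply/implyP => /and3P [eF fF].
  rewrite /edges_adjacent => /andP [ef ix].
  have [x [iex ifx]] : exists x, incident src dst e x /\ incident src dst f x.
    case/orP: ix => h; [exists (src e)|exists (dst e)]; by rewrite /incident eqxx ?orbT.
  rewrite !ffunE; case: (boolP (e \in M)) => eM; case: (boolP (f \in M)) => fM //.
    by move/eqP: ef; rewrite (Muniq x e f eM fM iex ifx).
  have [m mM im] := Mex x.
  have me : m != e by apply/negP => /eqP h; subst m; rewrite mM in eM.
  have mf : m != f by apply/negP => /eqP h; subst m; rewrite mM in fM.
  have : 3 <= dF F x.
    have c3 : #|m |: [set e; f]| = 3 by rewrite cardsU1 cards2 !inE negb_or me mf ef.
    rewrite /dF -c3; apply: subset_leq_card.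
    apply/subsetP => g; rewrite !inE => /or3P [] /eqP ->.
    - by rewrite (inF m mM) im.
    - by rewrite eF iex.
    - by rewrite fF ifx.
  by rewrite leqNgt ltnS F2.
have nuF : #|F| <= nu src dst 2 by apply: (leq_bigmax_cond (F := fun F : {set E} => #|F|)).
have F1 : forall v, 1 <= dF F v.
  move=> v; have [m mM im] := Mex v; apply/card_gt0P; exists m; by rewrite inE inF.
have maxl : forall e, e \notin F -> (dF F (src e) == 2) || (dF F (dst e) == 2).
  move=> e eF; apply/negPn/negP; rewrite negb_or => /andP [s2 d2].
  have vF' : valid (e |: F).
    rewrite /valid (subset_trans MF (subsetUr _ _)) /=; apply/forallP => v.
    have le : dF (e |: F) v <= (incident src dst e v) + dF F v.
      rewrite /dF; apply: leq_trans (subset_leq_card (_ : _ \subset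
         [set g in [set e] | incident src dst g v] :|: [set g in F | incident src dst g v])) _.
        by apply/subsetP => g; rewrite !inE => /andP [/orP [->|->] ->]; rewrite ?orbT.
      apply: leq_trans (leq_card_setU _ _) _; rewrite leq_add2r.
      case: (boolP (incident src dst e v)) => iv.
        have : [set g in [set e] | incident src dst g v] \subset [set e].
          by apply/subsetP => g; rewrite inE => /andP [].
        by move/subset_leq_card; rewrite cards1.
      rewrite leqn0 cards_eq0; apply/eqP/setP => g; rewrite !inE.
      by apply/negP => /andP [/eqP -> ]; rewrite (negbTE iv).
    case: (boolP (incident src dst e v)) => iv; last by move: le (F2 v); rewrite (negbTE iv) /=; lia.
    move: iv; rewrite /incident => /orP [] /eqP vv; subst v.
      move: le; have := F2 (src e); move: s2; rewrite /incident !eqxx /=; lia.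
    move: le; have := F2 (dst e); move: d2; rewrite /incident !eqxx orbT /=; lia.
  have := Fmax _ vF'; rewrite cardsU1 eF; lia.
pose phi e := if dF F (src e) == 2 then src e else dst e.
have phi2 : forall e, e \notin F -> dF F (phi e) = 2.
  by move=> e eF; rewrite /phi; have := maxl e eF; case: ifP => [/eqP ->|_ /= /eqP ->].
have phii : forall e, incident src dst e (phi e).
  by move=> e; rewrite /phi /incident; case: ifP; rewrite eqxx ?orbT.
have phiinj : {in ~: F &, injective phi}.
  move=> e f; rewrite !inE => eF fF pe; apply/eqP/negPn/negP => ef.
  set x := phi e.
  have : #|[set g in F | incident src dst g x] :|: [set e; f]| <= 3.
    rewrite -(hc x) /degree; apply: subset_leq_card; apply/subsetP => g.
    rewrite !inE => /orP [/andP [_ ->] //|/orP [] /eqP ->]; first exact: phii.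
    by rewrite /x pe; exact: phii.
  rewrite cardsU cards2 ef (_ : _ :&: _ = set0).
    by rewrite cards0 subn0 -/(dF F x) phi2.
  apply/setP => g; rewrite !inE; apply/negP => /andP [/andP [gF _] /orP [] /eqP gg]; subst g.
    by rewrite gF in eF.
  by rewrite gF in fF.
have NX : #|~: F| <= #|[set v | dF F v == 2]|.
  rewrite -(card_in_imset phiinj); apply: subset_leq_card; apply/subsetP => x.
  case/imsetP => e eF ->; rewrite inE phi2 //; by move: eF; rewrite inE.
have sumX : #|V| + #|[set v | dF F v == 2]| <= 2 * #|F|.
  have cV : #|V| = \sum_(v : V) 1 by rewrite sum1_card.
  rewrite -handshake2 cV card_predT -big_split /=; apply: leq_sum => v _.
  by have := F1 v; have := F2 v; case: (dF F v) => [|[|[|k]]].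
have sumE : 2 * #|E| = 3 * #|V|.
  rewrite -cardsT -(handshake2 [set: E]) /dF.
  transitivity (\sum_(v : V) 3); last by rewrite sum_nat_const mulnC.
  apply: eq_bigr => v _; rewrite -(hc v) /degree.
  by apply: eq_card => e; rewrite !inE.
have cN : #|~: F| = #|E| - #|F| by rewrite cardsCs setCK.
have cF : #|F| <= #|E| by apply: max_card.
move: cN NX sumX sumE nuF cF; lia.
Qed.

End Graph.


Unset Implicit Arguments.

Theorem theorem8 (V E : finType) (src dst : E -> V) :
  loopless src dst -> cubic src dst -> claw_free src dst ->
  5 * #|V| <= 6 * nu src dst 2.
Proof.
move=> hl hc hcf; exact: (main hl hc hcf).
Qed.
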